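(* Let $d\ge3$ and let $G$ be a $d$-map endowed with a $d$-GS arc labeling. Then for every inner face $f$ of $G$, the $f$-clockwise jumps are all non-zero and they sum to $d$.
   Context: A plane map is a connected graph (loops, multiple edges allowed) embedded in the plane without crossings, up to deformation; outer (unbounded) face, inner faces; outer vertices/edges lie on the outer face; $\deg(f)$ = number of corners of face $f$. For $d\ge3$, a $d$-map has inner faces of degree $\le d$ and outer face of degree $d$ bounded by a simple cycle, with outer vertices $v_1,\dots,v_d$ clockwise (indices mod $d$). An arc is a directed edge; $-a$ its opposite. An arc labeling assigns a label in $[d]$ to every inner arc and label $i$ to the outer arc $(v_i,v_{i+1})$ for each $i\in[d]$. Label jump from label $i$ to $i'$: the $\delta\in\{0,\dots,d-1\}$ with $i+\delta\equiv i'\pmod d$. For an inner vertex $v$, a $v$-clockwise jump is the jump from an arc with initial vertex $v$ to the next such arc in clockwise order around $v$. For an inner face $f$, consider the arcs incident to $f$ having $f$ on their right; an $f$-clockwise jump is the jump from such an arc to the next one in clockwise order around $f$. A $d$-GS arc labeling is an arc labeling such that: (AL0) for all $i$, every inner arc with initial vertex $v_i$ has label $i$; (AL1) for every inner vertex $v$, the $v$-clockwise jumps sum to $d$; (AL2) for two consecutive arcs $a,a'$ in clockwise order around an inner vertex $v$ (both with initial vertex $v$), the jump from $a$ to $a'$ is at most $d-\deg(f)$, where $f$ is the face containing the corner between $a$ and $a'$; (AL3) for opposite inner arcs $a,-a$, the jump from the label of $a$ to the label of $-a$ equals $d+1-\deg(f)$, where $f$ is the face on the right of $a$. *)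

(* Defs.v *)
(* Plane maps are encoded as combinatorial maps (rotation systems). *)
From mathcomp Require Import all_boot all_order all_fingroup.
Set Implicit Arguments. Unset Strict Implicit. Unset Printing Implicit Defensive.

Section PlaneMaps.
Variable D : finType.            (* the arcs (darts) of the map *)
Variables alpha sigma : {perm D}.
(* alpha a = -a, the opposite arc;
   sigma a = the next arc in clockwise order around the initial vertex of a.
   Vertices = sigma-orbits (initial vertex), edges = alpha-orbits. *)

(* phi a = the next arc, in clockwise order around the face on the right of a,
   among the arcs having that face on their right.  Faces = phi-orbits;
   the face on the right of a is the phi-orbit of a, deg(f) = its size. *)
Definition phi (a : D) : D := (sigma^-1)%g (alpha a).

Definition glink : rel D := fun x y => (y == sigma x) || (y == alpha x).

Definition num_vertices := fcard sigma D.
Definition num_faces := fcard phi D.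

(* connected map of genus 0 (Euler: V - E + F = 2, with E = #|D|/2) *)
Definition plane_map : Prop :=
  [/\ forall a, alpha (alpha a) = a,
      forall a, alpha a != a,
      forall a b, connect glink a b
    & 2 * (num_vertices + num_faces) = #|D| + 4].

Definition fdeg (a : D) : nat := fingraph.order phi a.

Variable d : nat.
Variable r : D. (* an arc having the outer face on its right *)

Definition in_outer_face (a : D) : bool := fconnect phi r a.

(* c i = the outer arc (v_i, v_{i+1}), for i : 'I_d (outer face on its left) *)
Definition outer_cw_arc (i : nat) : D := alpha (iter ((d - i) %% d) phi r).

Definition outer_arc (a : D) : bool := in_outer_face a || in_outer_face (alpha a).
Definition inner_arc (a : D) : bool := ~~ outer_arc a.
Definition inner_vertex (a : D) : bool :=
  ~~ [exists b, fconnect sigma a b && in_outer_face b].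
Definition inner_face (a : D) : bool := ~~ in_outer_face a.

(* d-map: outer face of degree d bounded by a simple cycle (its d arcs have
   pairwise distinct initial vertices), inner faces of degree <= d *)
Definition d_map : Prop :=
  [/\ 3 <= d, plane_map,
      fdeg r = d,
      forall a b, in_outer_face a -> in_outer_face b -> fconnect sigma a b -> a = b
    & forall a, inner_face a -> fdeg a <= d].

Definition jump (i i' : 'I_d) : nat := (i' + d - i) %% d.

(* labels [d] are represented by 'I_d (label k in the paper <-> k-1 here) *)
Definition d_GS_labeling (lab : D -> 'I_d) : Prop :=
  [/\ forall i : 'I_d, lab (outer_cw_arc i) = i,
      (* AL0 *)
      forall (i : 'I_d) a, inner_arc a -> fconnect sigma (outer_cw_arc i) a -> lab a = i,
      (* AL1 *)
      forall a, inner_vertex a ->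
        \sum_(b | fconnect sigma a b) jump (lab b) (lab (sigma b)) = d,
      (* AL2: the corner between a and sigma a lies in the face right of a *)
      forall a, inner_vertex a -> jump (lab a) (lab (sigma a)) <= d - fdeg a
    & (* AL3 *)
      forall a, inner_arc a -> jump (lab a) (lab (alpha a)) = d.+1 - fdeg a].

End PlaneMaps.

(* Main.v *)
Require Import Defs.
From mathcomp Require Import all_boot all_order all_fingroup zify.
Set Implicit Arguments. Unset Strict Implicit. Unset Printing Implicit Defensive.

Lemma jump_lt d (i j : 'I_d) : jump i j < d.
Proof. rewrite /jump ltn_mod; by case: d i j => [[]|]. Qed.

Lemma jumpK d (i j : 'I_d) : (i + jump i j) %% d = j.
Proof.
rewrite /jump modnDmr addnBA; last by apply: leq_trans (ltnW (ltn_ord i)) (leq_addl _ _).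
rewrite addnC addnK modnDr modn_small //.
Qed.

Lemma jump_uniq d (i j : 'I_d) x : x < d -> (i + x) %% d = j -> jump i j = x.
Proof.
move=> xd e. have /eqP : (i + jump i j) %% d = (i + x) %% d by rewrite jumpK e.
by rewrite eqn_modDl !modn_small // ?jump_lt // => /eqP.
Qed.

Lemma jump_sub d (i j k : 'I_d) : jump k j <= jump i j -> jump i k = jump i j - jump k j.
Proof.
move=> le. apply: jump_uniq.
  have := jump_lt i j; lia.
apply/eqP; rewrite -(modn_small (ltn_ord k)) -(eqn_modDr (jump k j)) -addnA subnK //.
by rewrite !jumpK.
Qed.

Lemma jump_refl d (i : 'I_d) : jump i i = 0.
Proof. by rewrite /jump addnC addnK modnn. Qed.

Lemma jump_sym d (i j : 'I_d) : i != j -> jump i j + jump j i = d.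
Proof.
move=> ne. have x0 : jump i j != 0.
  apply: contra ne => /eqP e. have := jumpK i j. rewrite e addn0 modn_small // => e2.
  by apply/eqP; apply: val_inj.
have -> : jump j i = d - jump i j.
  apply: jump_uniq. rewrite ltn_subrL; apply/andP; split; first by rewrite lt0n.
    by case: d i {ne x0 j} => [[]|].
  rewrite -(jumpK i j) modnDml -addnA subnKC; last exact: ltnW (jump_lt _ _).
  by rewrite modnDr modn_small.
by rewrite subnKC // ltnW // jump_lt.
Qed.
Theorem mainTheorem15 (d : nat) (D : finType) (alpha sigma : {perm D}) (r : D)
    (lab : D -> 'I_d) :
  d_map alpha sigma d r ->
  d_GS_labeling alpha sigma r lab ->
  forall a : D, inner_face alpha sigma r a ->
    (forall b, fconnect (phi alpha sigma) a b ->
       jump (lab b) (lab (phi alpha sigma b)) != 0) /\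
    \sum_(b | fconnect (phi alpha sigma) a b)
       jump (lab b) (lab (phi alpha sigma b)) = d.
Proof.
move=> [d3 [aK aN conn euler] degr Ouniq innerdeg] [AL0' AL0 AL1 AL2 AL3] a0 Ha0.
rewrite /inner_face /in_outer_face in Ha0.
rewrite /num_vertices /num_faces in euler.
rewrite /fdeg in degr innerdeg AL2 AL3.
rewrite /in_outer_face in Ouniq.
rewrite /inner_arc /outer_arc /in_outer_face in AL0 AL3.
rewrite /inner_vertex /in_outer_face in AL1 AL2.
move: AL0' AL0. rewrite /outer_cw_arc => AL0' AL0.
set p := phi alpha sigma in Ha0 euler degr Ouniq innerdeg AL0' AL0 AL1 AL2 AL3 *.
set c := fun i : nat => alpha (iter ((d - i) %% d) p r).
change (forall i : 'I_d, lab (c i) = i) in AL0'.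
change (forall (i : 'I_d) a, ~~ (fconnect p r a || fconnect p r (alpha a)) ->
   fconnect sigma (c i) a -> lab a = i) in AL0.
pose O x := fconnect p r x.
have sinj : injective sigma := @perm_inj _ sigma.
have pinj : injective p by move=> x y; rewrite /p /phi => /perm_inj /perm_inj.
have ssym := fconnect_sym sinj.
have sp x : sigma (p x) = alpha x by rewrite /p /phi permKV.
have vert x : fconnect sigma (p (alpha x)) x by have := fconnect1 sigma (p (alpha x)); rewrite sp aK.
have vert2 x : fconnect sigma (p x) (alpha x) by have := fconnect1 sigma (p x); rewrite sp.
have Ocl x : fconnect p r (p x) = fconnect p r x by rewrite -same_fconnect1_r.
have d0 : 0 < d by apply: leq_trans d3.
have cardO : #|O| = d by rewrite -degr.
have Odisj x : O x -> O (alpha x) -> False.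
  move=> Ox Oax.
  have e1 : p (alpha x) = x by apply: Ouniq; rewrite ?vert // Ocl.
  have e2 : p x = alpha x by apply: Ouniq; rewrite ?vert2 // Ocl.
  have sub : {subset fconnect p x <= pred2 x (p x)}.
    move=> y /iter_findex <-. elim: (findex _ _ _) => [|n IH] /=; first by rewrite !inE eqxx.
    move: IH; rewrite !inE.
    case/orP => /eqP ->; first by rewrite eqxx orbT.
    by rewrite e2 e1 eqxx.
  have := subset_leq_card (introT subsetP sub). rewrite card2.
  have -> : #|fconnect p x| = #|O|.
    by apply: eq_card => y; rewrite /O -!topredE /= (same_connect (fconnect_sym pinj) Ox).
  rewrite cardO => h. have : d <= 2 by apply: leq_trans h _; case: (x != p x).
  by rewrite leqNgt (leq_trans _ d3).
have Cinj x y : fconnect p r (alpha x) -> fconnect p r (alpha y) -> fconnect sigma x y -> x = y.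
  move=> Ox Oy xy.
  have h : fconnect sigma (p (alpha x)) (p (alpha y)).
    by apply: connect_trans (vert x) _; apply: connect_trans xy _; rewrite ssym vert.
  have := Ouniq _ _ (etrans (Ocl _) Ox) (etrans (Ocl _) Oy) h.
  by move/pinj/perm_inj.
have F1 x : fconnect p r (alpha x) -> exists i : 'I_d, x = c i.
  move=> Ox. have nd := findex_max Ox. rewrite degr in nd.
  exists (Ordinal (ltn_pmod (d - findex p r (alpha x)) d0)).
  rewrite /c /=.
  have -> : (d - (d - findex p r (alpha x)) %% d) %% d = findex p r (alpha x).
    move: nd; case: (findex p r (alpha x)) => [|n] nd.
      by rewrite subn0 modnn subn0 modnn.
    rewrite (@modn_small (d - n.+1)); last by lia.
    rewrite subKn; last exact: ltnW. by rewrite modn_small.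
  by rewrite iter_findex // aK.
have cO (i : 'I_d) : fconnect p r (alpha (c i)) by rewrite /c aK fconnect_iter.
have cnO (i : 'I_d) : ~~ fconnect p r (c i) by apply/negP => h; apply: (Odisj _ h (cO i)).
have L b : ~~ fconnect p r b -> [exists o, fconnect sigma b o && fconnect p r o] ->
    exists i : 'I_d, fconnect sigma b (c i) /\ lab b = i.
  move=> nOb /existsP [o /andP [bo Oo]].
  have Oo' : fconnect p r (alpha (sigma o)).
    by rewrite -Ocl /p /phi aK permK.
  have [i ei] := F1 _ Oo'.
  have bci : fconnect sigma b (c i) by rewrite -ei; apply: connect_trans bo (fconnect1 _ _).
  exists i; split => //.
  case: (boolP (fconnect p r b || fconnect p r (alpha b))) => [hb|hb]; last first.
    by apply: AL0 hb _; rewrite ssym.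
  have Oab : fconnect p r (alpha b) by move: hb; rewrite (negbTE nOb).
  by rewrite (Cinj _ _ Oab (cO i) bci) AL0'.
have Lsame b b' : ~~ fconnect p r b -> ~~ fconnect p r b' ->
    [exists o, fconnect sigma b o && fconnect p r o] -> fconnect sigma b b' -> lab b = lab b'.
  move=> nb nb' ex bb'.
  have ex' : [exists o, fconnect sigma b' o && fconnect p r o].
    case/existsP: ex => o /andP [bo Oo]; apply/existsP; exists o.
    by rewrite Oo andbT (same_connect (fconnect_sym sinj) bb') in bo *.
  have [i [bi li]] := L _ nb ex. have [j [bj lj]] := L _ nb' ex'.
  have cij : fconnect sigma (c i) (c j).
    by apply: connect_trans _ bj; apply: connect_trans _ bb'; rewrite ssym.
  have := Cinj _ _ (cO i) (cO j) cij => e.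
  by rewrite li lj -(AL0' i) -(AL0' j) e.
have iterd : iter d p r = r by rewrite -{1}degr iter_order.
have iter_mod m : iter m p r = iter (m %% d) p r.
  rewrite {1}(divn_eq m d) addnC iterD; congr iter.
  elim: (m %/ d) => [|q IH] //. by rewrite mulSn iterD IH iterd.
have Cjump x : ~~ fconnect p r x -> fconnect p r (alpha x) -> jump (lab x) (lab (p x)) = 1.
  move=> nOx Oax. have [i ->] := F1 _ Oax.
  have nOp : ~~ fconnect p r (p (c i)) by rewrite Ocl.
  have exp : [exists o, fconnect sigma (p (c i)) o && fconnect p r o].
    by apply/existsP; exists (alpha (c i)); rewrite vert2 cO.
  have [j [pj lj]] := L _ nOp exp.
  pose i' := Ordinal (ltn_pmod i.+1 d0).
  have key : fconnect sigma (p (c i)) (c i').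
    apply: (connect_trans (vert2 (c i))).
    suff -> : alpha (c i) = p (alpha (c i')) by exact: vert.
    rewrite /c !aK -iterS.
    have := ltn_ord i; rewrite leq_eqVlt => /orP [/eqP e | lt].
      have h1 : (d - i) %% d = 1 by rewrite modn_small; lia.
      have h2 : (d - i') %% d = 0.
        have -> : (i' : nat) = 0 by rewrite /= e modnn.
        by rewrite subn0 modnn.
      by rewrite h1 h2.
    have h2 : (d - i') %% d = (d - i).-1.
      by rewrite /= (modn_small lt) modn_small; lia.
    rewrite h2 prednK; last lia. by rewrite -iter_mod.
  have cij : fconnect sigma (c j) (c i') by apply: connect_trans key; rewrite ssym.
  have eji := Cinj _ _ (cO j) (cO i') cij.
  have -> : lab (p (c i)) = i' by rewrite lj -(AL0' j) eji AL0'.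
  rewrite AL0'. apply: jump_uniq => //; first by apply: leq_trans d3.
  by rewrite addn1.
have ordp x : fingraph.order p (p x) = fingraph.order p x.
  by apply: eq_card => y; rewrite -!topredE /= -same_fconnect1.
have Ijump x : ~~ (fconnect p r x || fconnect p r (alpha x)) ->
  jump (lab (p x)) (lab (alpha x)) < jump (lab x) (lab (alpha x)) /\
  jump (lab x) (lab (p x)) + jump (lab (p x)) (lab (alpha x)) = jump (lab x) (lab (alpha x)).
  move=> hx. have J3 := AL3 x hx.
  have nOx : ~~ fconnect p r x by move: hx; rewrite negb_or => /andP [].
  have nOax : ~~ fconnect p r (alpha x) by move: hx; rewrite negb_or => /andP [].
  have nOpx : ~~ fconnect p r (p x) by rewrite Ocl.
  have kd : fingraph.order p x <= d := innerdeg x nOx.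
  have lt : jump (lab (p x)) (lab (alpha x)) < jump (lab x) (lab (alpha x)).
    case: (boolP [exists o, fconnect sigma (p x) o && fconnect p r o]) => ex.
      by rewrite (Lsame _ _ nOpx nOax ex (vert2 x)) jump_refl J3; lia.
    have := AL2 (p x) ex. rewrite sp ordp J3. lia.
  split => //. by rewrite (jump_sub (ltnW lt)) subnK // ltnW.
have sumc (P : pred D) n : \sum_(x | P x) n = #|P| * n by rewrite -sum_nat_const.
pose IA := fun x => ~~ (fconnect p r x || fconnect p r (alpha x)).
pose IV := fun x => ~~ [exists o, fconnect sigma x o && fconnect p r o].
pose jm := fun x => jump (lab x) (lab (p x)).
pose J2 := fun x => jump (lab x) (lab (sigma x)).
pose J3 := fun x => jump (lab x) (lab (alpha x)).
have sumO : \sum_(x | fconnect p r x) 1 = d by rewrite sumc muln1.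
have sumC (F : D -> nat) : (forall x, fconnect p r (alpha x) -> F x = 1) ->
    \sum_(x | ~~ fconnect p r x && fconnect p r (alpha x)) F x = d.
  move=> hF. rewrite -sumO [RHS](reindex_inj (@perm_inj _ alpha)) /=.
  apply: eq_big => x.
    case: (boolP (fconnect p r (alpha x))) => h; rewrite ?andbT ?andbF //.
    by apply/negP => h'; apply: (Odisj _ h' h).
  by move/andP => [_ /hF].
have stepA : \sum_(x | ~~ fconnect p r x) jm x = \sum_(x | IA x) jm x + d.
  rewrite (bigID (fun x => fconnect p r (alpha x))) /= addnC; congr (_ + _).
    by apply: eq_bigl => x; rewrite /IA negb_or.
  apply: sumC => x h. case: (boolP (fconnect p r x)) => hx; first by case: (Odisj _ hx h).
  exact: Cjump.
have stepB : \sum_(x | IA x) jm x + \sum_(x | IA x) J2 (p x) = \sum_(x | IA x) J3 x.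
  rewrite -big_split /=; apply: eq_bigr => x hx.
  by rewrite /jm /J2 /J3 sp; exact: (Ijump x hx).2.
have J3pos x : IA x -> 0 < J3 x by move=> hx; have [h _] := Ijump x hx; apply: leq_ltn_trans h.
have stepC : 2 * \sum_(x | IA x) J3 x = #|IA| * d.
  have IAa x : IA (alpha x) = IA x by rewrite /IA aK orbC.
  rewrite mul2n -addnn {2}(reindex_inj (@perm_inj _ alpha)) /=.
  rewrite (eq_bigl _ _ IAa) -big_split /= -sumc.
  apply: eq_bigr => x hx. rewrite /J3 aK jump_sym //.
  apply/negP => /eqP e. by have := J3pos x hx; rewrite /J3 e jump_refl.
have stepD : \sum_(x | IA x) J2 (p x) = \sum_(y | IV y) J2 y.
  rewrite [RHS](reindex_inj pinj) /= (bigID (fun x => IV (p x))) /=.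
  rewrite [X in _ + X]big1 ?addn0 => [|x /andP [hx niv]].
    apply: eq_bigl => x. case: (boolP (IV (p x))) => iv; rewrite ?andbT ?andbF //.
    rewrite /IA negb_or; apply/andP; split; apply: contra iv => h; apply/existsP.
      by exists (p x); rewrite connect0 Ocl h.
    by exists (alpha x); rewrite vert2 h.
  have nx : ~~ fconnect p r x by move: hx; rewrite /IA negb_or => /andP [].
  have nax : ~~ fconnect p r (alpha x) by move: hx; rewrite /IA negb_or => /andP [].
  rewrite /J2 sp (Lsame (p x) (alpha x)) ?jump_refl ?Ocl //; first exact: negbNE.
have IVcl y z : fconnect sigma y z -> IV y = IV z.
  move=> yz; rewrite /IV; congr (~~ _); apply: eq_existsb => o.
  by rewrite (same_connect (fconnect_sym sinj) yz).
have stepE : \sum_(y | IV y) J2 y = #|[pred v | froots sigma v && IV v]| * d.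
  rewrite (partition_big (froot sigma) [pred v | froots sigma v && IV v]) => [|y hy]; last first.
    apply/andP; split; first exact: roots_root. by rewrite -(IVcl _ _ (connect_root _ y)).
  rewrite -sumc; apply: eq_bigr => v /andP [rv iv].
  transitivity (\sum_(y | fconnect sigma v y) J2 y); last exact: AL1 v iv.
  apply: eq_bigl => y. rewrite -{1}(eqP rv) root_connect; last exact: (fconnect_sym sinj).
  apply/idP/idP.
    by move=> /andP [_ h]; rewrite ssym; exact: h.
  move=> h; apply/andP; split; first by rewrite -(IVcl _ _ h).
  by rewrite ssym in h; exact: h.
have stepF : #|D| = d + d + #|IA|.
  have -> : #|D| = \sum_(x : D) 1 by rewrite sum1_card.
  rewrite (bigID (fun x => fconnect p r x)) /= sumO -addnA; congr (_ + _).
  rewrite (bigID (fun x => fconnect p r (alpha x))) /= sumC // sumc muln1; congr (_ + _).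
  by apply: eq_card => x; rewrite -!topredE /= /IA negb_or.
have stepG : fcard sigma D = #|[pred v | froots sigma v && IV v]| + d.
  rewrite (n_compC IV); congr (_ + _).
  rewrite -[RHS]sumO (partition_big (froot sigma) [pred v | froots sigma v && ~~ IV v]) => [|x Ox].
    have -> : fcard sigma [predC IV] = \sum_(v | froots sigma v && ~~ IV v) 1.
      by rewrite sumc muln1; apply: eq_card => v; rewrite !inE.
    apply: eq_bigr => v /andP [rv nv].
    move: nv; rewrite /IV negbK => /existsP [o /andP [vo Oo]].
    rewrite (big_pred1 o) // => x. apply/idP/idP.
      move=> /andP [Ox /eqP fx]. apply/eqP; apply: Ouniq => //.
      apply: connect_trans vo. by rewrite -fx; apply: connect_root.
    move=> /eqP ->; rewrite Oo /= -{1}(eqP rv); apply/eqP/rootP; first exact: (fconnect_sym sinj).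
    by rewrite ssym.
  apply/andP; split; first exact: roots_root.
  rewrite -(IVcl _ _ (connect_root _ x)) /IV negbK; apply/existsP; exists x.
  by rewrite connect0 Ox.
have stepH : fcard p D = #|[pred f | froots p f && ~~ fconnect p r f]| + 1.
  rewrite (n_compC (fconnect p r)) n_comp_connect; last exact: (fconnect_sym pinj).
  rewrite addnC.
  by congr (_ + 1); apply: eq_card => f; rewrite !inE.
pose S := fun f => \sum_(y | fconnect p f y) jm y.
have Ofr y : fconnect p r (froot p y) = fconnect p r y.
  apply/idP/idP => h; apply: connect_trans h _; last exact: connect_root.
  by rewrite (fconnect_sym pinj); exact: connect_root.
have stepI : \sum_(x | ~~ fconnect p r x) jm x =
    \sum_(f | froots p f && ~~ fconnect p r f) S f.
  rewrite (partition_big (froot p) [pred f | froots p f && ~~ fconnect p r f]) => [|y ny]; last first.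
    apply/andP; split; first exact: (roots_root (fconnect_sym pinj)). by rewrite Ofr.
  apply: eq_bigr => f /andP [rf nf]. apply: eq_bigl => y.
  rewrite -{1}(eqP rf) root_connect; last exact: (fconnect_sym pinj).
  apply/idP/idP.
    by move=> /andP [_ h]; rewrite (fconnect_sym pinj); exact: h.
  move=> h; apply/andP; split.
    apply: contra nf => Oy. apply: connect_trans Oy _. by rewrite (fconnect_sym pinj).
  by rewrite (fconnect_sym pinj) in h; exact: h.
have jpos y : ~~ fconnect p r y -> 0 < jm y.
  move=> ny. case: (boolP (fconnect p r (alpha y))) => hy; first by rewrite /jm Cjump.
  have hI : IA y by rewrite /IA negb_or ny hy.
  have [h1 h2] := Ijump y hI. rewrite /jm. lia.
have Sdiv f : d %| S f.
  have e1 : \sum_(y | fconnect p f y) (lab (p y) : nat) = \sum_(y | fconnect p f y) (lab y : nat).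
    rewrite [RHS](reindex_inj pinj); apply: eq_bigl => y; exact: (same_fconnect1_r pinj).
  have : (\sum_(y | fconnect p f y) (lab y : nat) + S f) %% d =
         (\sum_(y | fconnect p f y) (lab y : nat) + 0) %% d.
    rewrite addn0 /S -big_split /= -modn_summ.
    rewrite (eq_bigr (fun y => (lab (p y) : nat))) ?e1 // => y _.
    exact: jumpK.
  by move/eqP; rewrite eqn_modDl mod0n.
set nQ := #|[pred v | froots sigma v && IV v]| in stepE stepG.
set nF := #|[pred f | froots p f && ~~ fconnect p r f]| in stepH.
have hIA : #|IA| + 2 = 2 * nQ + 2 * nF.
  move: euler; rewrite stepG stepH stepF; lia.
have hm : #|IA| * d + 2 * d = 2 * (nQ * d) + 2 * (nF * d).
  by rewrite -mulnDl hIA mulnDl !mulnA.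
have tot : \sum_(f | froots p f && ~~ fconnect p r f) S f = nF * d.
  rewrite -stepI stepA. move: stepB stepC hm. rewrite stepD stepE.
  set A := \sum_(x | IA x) jm x. set B := \sum_(x | IA x) J3 x.
  set X := #|IA| * d. set Y := nQ * d. set Z := nF * d. lia.
have Sge f : ~~ fconnect p r f -> d <= S f.
  move=> nf. apply: dvdn_leq (Sdiv f). rewrite /S (bigD1 f) ?connect0 //=.
  by apply: leq_trans (jpos f nf) (leq_addr _ _).
have Seq f : froots p f && ~~ fconnect p r f -> S f = d.
  move=> hf. have nf : ~~ fconnect p r f by case/andP: hf.
  have : \sum_(f | froots p f && ~~ fconnect p r f) (S f - d) == 0.
    rewrite -(eqn_add2r (nF * d)) add0n -{2}tot.
    have -> : nF * d = \sum_(f | froots p f && ~~ fconnect p r f) d by rewrite sumc.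
    by rewrite -big_split /=; apply/eqP; apply: eq_bigr => g /andP [_ ng]; rewrite subnK // Sge.
  rewrite sum_nat_eq0 => /forallP /(_ f). rewrite hf /= subn_eq0 => h.
  by apply/eqP; rewrite eqn_leq h Sge.
have ra : froots p (froot p a0) && ~~ fconnect p r (froot p a0).
  by rewrite (roots_root (fconnect_sym pinj)) Ofr Ha0.
split.
  move=> b ab. rewrite -lt0n; apply: jpos. apply: contra Ha0 => Ob.
  apply: connect_trans Ob _. by rewrite (fconnect_sym pinj).
transitivity (S (froot p a0)); last exact: Seq _ ra.
rewrite /S; apply: eq_bigl => y.
by rewrite (same_connect (fconnect_sym pinj) (connect_root _ a0)).
Qed.
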